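(* Let $G_1,G_2$ be finite graphs and let $f:V(G_2)\to V(G_1)$ be an $(a,b)$-uniform map for some $a,b\in\mathbb{N}$. Then $A(G_1)\prec A(G_2)/b$.
   Context: For a finite graph $G$, $A(G)$ is the operator on functions $v:V(G)\to\mathbb{R}$ (with the uniform probability measure on $V(G)$) given by $(vA(G))(i)=\sum_{(j,i)\in E(G)}v(j)$. A map $f:V(G_2)\to V(G_1)$ is $(a,b)$-uniform if it is a graph homomorphism, $|f^{-1}(v)|=a$ for all $v\in V(G_1)$, and for every $v\in V(G_2)$ and every neighbor $w$ of $f(v)$, exactly $b$ neighbors of $v$ are mapped to $w$. For an operator $B$, $\mathcal{S}_k(B)$ is the set of joint distributions on $\mathbb{R}^{2k}$ of $(v_1,\dots,v_k,v_1B,\dots,v_kB)$ over functions $v_i$ with values in $[-1,1]$, and $\mathcal{S}^*_k(B)$ its closure in the Lévy–Prokhorov metric. $B\prec C$ (weak containment) means $\mathcal{S}^*_k(B)\subseteq\mathcal{S}^*_k(C)$ for every $k\in\mathbb{N}$. *)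

(* Defs.v *)
From HB Require Import structures.
From mathcomp Require Import all_boot all_order all_algebra.
From mathcomp Require Import all_classical all_reals all_analysis.
Set Implicit Arguments. Unset Strict Implicit. Unset Printing Implicit Defensive.
Import Order.TTheory GRing.Theory Num.Theory.
Local Open Scope classical_set_scope.
Local Open Scope ring_scope.

Definition simple_graph (V : finType) (e : rel V) : Prop :=
  symmetric e /\ irreflexive e.

Definition graph_hom (V1 V2 : finType) (e1 : rel V1) (e2 : rel V2)
  (f : V2 -> V1) : Prop := forall x y, e2 x y -> e1 (f x) (f y).

Definition uniform_map (V1 V2 : finType) (e1 : rel V1) (e2 : rel V2)
  (f : V2 -> V1) (a b : nat) : Prop :=
  [/\ graph_hom e1 e2 f,
      (forall u : V1, #|[set x | f x == u]| = a) &
      (forall (v : V2) (w : V1), e1 (f v) w ->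
         #|[set x | e2 v x && (f x == w)]| = b)].

Definition adj_op (R : realType) (V : finType) (e : rel V)
  (v : V -> R) : V -> R := fun i => \sum_(j | e j i) v j.

(* The point (v_1(x),...,v_k(x),(v_1 B)(x),...,(v_k B)(x)) in R^{2k}. *)
Definition joint_point (R : realType) (V : finType)
  (B : (V -> R) -> (V -> R)) (k : nat) (v : 'I_k -> V -> R) (x : V)
  : (k + k).-tuple R :=
  [tuple (match fintype.split i with inl j => v j x | inr j => B (v j) x end)
   | i < k + k].

(* S_k(B): joint distributions (pushforwards of the uniform probability
   measure on V) of (v_1,...,v_k,v_1 B,...,v_k B), with v_i : V -> [-1,1]. *)
Definition S_k (R : realType) (V : finType) (B : (V -> R) -> (V -> R))
  (k : nat) : set (probability ((k + k).-tuple R) R) :=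
  [set mu | exists v : 'I_k -> V -> R,
     (forall j x, -1 <= v j x <= 1) /\
     (forall A : set ((k + k).-tuple R), measurable A ->
        mu A = ((\sum_(x : V) \1_A (joint_point B v x)) / #|V|%:R)%:E)].

Definition tdist (R : realType) (n : nat) (x y : n.-tuple R) : R :=
  \big[Num.max/0]_(i < n) `|tnth x i - tnth y i|.

Definition nbhd_eps (R : realType) (n : nat) (A : set (n.-tuple R)) (eps : R)
  : set (n.-tuple R) :=
  [set y | exists2 x, A x & tdist x y < eps].

Definition LP_dist (R : realType) (n : nat) (mu nu : probability (n.-tuple R) R)
  : \bar R :=
  ereal_inf [set eps%:E | eps in [set eps : R | 0 < eps /\
     (forall A : set (n.-tuple R), measurable A ->
        (mu A <= nu (nbhd_eps A eps) + eps%:E)%E /\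
        (nu A <= mu (nbhd_eps A eps) + eps%:E)%E)]].

Definition LP_closure (R : realType) (n : nat) (S : set (probability (n.-tuple R) R))
  : set (probability (n.-tuple R) R) :=
  [set mu | forall eps : R, 0 < eps ->
     exists2 nu, S nu & (LP_dist mu nu < eps%:E)%E].

Definition S_k_star (R : realType) (V : finType) (B : (V -> R) -> (V -> R))
  (k : nat) := LP_closure (@S_k R V B k).

Definition weakly_contained (R : realType) (V W : finType)
  (B : (V -> R) -> (V -> R)) (C : (W -> R) -> (W -> R)) : Prop :=
  forall k : nat, @S_k_star R V B k `<=` @S_k_star R W C k.

(* Main.v *)
Require Import Defs.
From HB Require Import structures.
From mathcomp Require Import all_boot all_order all_algebra.
From mathcomp Require Import all_classical all_reals all_analysis.
From mathcomp Require Import ring.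
Import Order.TTheory GRing.Theory Num.Theory.
Local Open Scope ring_scope.

Lemma ccard (T : finType) (P : pred T) :
  #|[set x | P x]%classic| = #|[set x | P x]|.
Proof. apply: eq_card => x; rewrite inE. unfold in_mem; simpl. rewrite /in_set asboolb. by []. Qed.

Lemma sum_fiber (R : realType) (V1 V2 : finType) (f : V2 -> V1) (P : pred V2)
  (F : V1 -> R) :
  \sum_(y | P y) F (f y) = \sum_x #|[set y | P y && (f y == x)]|%:R * F x.
Proof.
rewrite (partition_big f predT) //=; apply: eq_bigr => x _.
rewrite (eq_bigr (fun _ => F x)); last by move=> y /andP [_ /eqP ->].
rewrite (eq_bigl (fun y => P y && (f y == x))); last first.
  by move=> y.
rewrite sumr_const mulr_natl; congr (_ *+ _).
by apply: eq_card => y; rewrite !inE.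
Qed.

Lemma nbr_sum (R : realType) (V1 V2 : finType) (e1 : rel V1) (e2 : rel V2)
  (f : V2 -> V1) (a b : nat) (v : V1 -> R) (y : V2) :
  simple_graph e1 -> simple_graph e2 -> uniform_map e1 e2 f a b ->
  \sum_(x | e2 x y) v (f x) = b%:R * \sum_(w | e1 w (f y)) v w.
Proof.
move=> [s1 _] [s2 _] [hom _ unif].
rewrite sum_fiber big_distrr /= (bigID (fun w => e1 w (f y))) /=.
rewrite [X in _ + X]big1 ?addr0; last first.
  move=> w /negbTE nw; rewrite (_ : #|_| = 0%N) ?mul0r //.
  apply/eqP; rewrite cards_eq0; apply/eqP/setP => x; rewrite !inE.
  apply/negbTE; apply/negP => /andP [exy /eqP fxw].
  by move: (hom _ _ exy); rewrite fxw nw.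
apply: eq_bigr => w ew; congr (_ * _); congr (_%:R).
rewrite -(unif y w); last by rewrite s1.
by rewrite ccard; apply: eq_card => x; rewrite !inE s2.
Qed.

Theorem lemma12p2 (R : realType) (V1 V2 : finType) (e1 : rel V1) (e2 : rel V2)
  (f : V2 -> V1) (a b : nat) :
  simple_graph e1 -> simple_graph e2 ->
  (0 < #|V1|)%N -> (0 < #|V2|)%N -> (0 < b)%N ->
  uniform_map e1 e2 f a b ->
  weakly_contained (adj_op (R := R) e1)
    (fun (v : V2 -> R) (i : V2) => adj_op e2 v i / b%:R).
Proof.
move=> g1 g2 c1 c2 bpos U k.
have [_ fib0 _] := U.
have fib u : #|[set x | f x == u]| = a by rewrite -(fib0 u) ccard.
have fib' u : #|[set y | predT y && (f y == u)]| = a.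
  by rewrite -(fib u); apply: eq_card => y; rewrite !inE.
have cardV2 : #|V2| = (a * #|V1|)%N.
  have H := @sum_fiber R V1 V2 f predT (fun _ => 1).
  have H2 : \sum_x #|[set y | predT y && (f y == x)]|%:R * (1:R) = \sum_(x : V1) a%:R.
    by apply: eq_bigr => x _; rewrite fib' mulr1.
  rewrite H2 !sumr_const in H. 
  by move/eqP: H; rewrite -[X in _ == X]mulr_natl -natrM eqr_nat mulnC => /eqP.
have apos : (0 < a)%N by move: c2; rewrite cardV2 muln_gt0 => /andP [].
have sub : (S_k (adj_op e1) (k:=k) `<=` S_k (fun (v : V2 -> R) (i : V2) => adj_op e2 v i / b%:R) (k:=k))%classic.
  move=> mu [v [hv hmu]].
  exists (fun j y => v j (f y)); split; first by move=> j x; apply: hv.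
  move=> A mA; rewrite hmu //; congr (_%:E).
  have jp : forall y, joint_point (fun (w : V2 -> R) (i : V2) => adj_op e2 w i / b%:R)
        (fun j y => v j (f y)) y = joint_point (adj_op e1) v (f y).
    move=> y; apply: eq_from_tnth => i; rewrite !tnth_mktuple.
    case: fintype.split => j //=.
    rewrite /adj_op (nbr_sum _ _ _ _ _ _ _ _ _ _ g1 g2 U) mulrC mulrA mulVf ?mul1r //.
    by rewrite pnatr_eq0 -lt0n.
  under [in RHS]eq_bigr => y _ do rewrite jp.
  rewrite (@sum_fiber R V1 V2 f predT (fun x => \1_A (joint_point (adj_op e1) v x))).
  rewrite [in RHS](eq_bigr (fun x => a%:R * \1_A (joint_point (adj_op e1) v x))); last first.
    by move=> x _; rewrite -(fib x); congr (_%:R * _); apply: eq_card => y; rewrite !inE.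
  rewrite -big_distrr /= cardV2 natrM invfM .
  have ha : a%:R != 0 :> R by rewrite pnatr_eq0 -lt0n.
  have hV1 : #|V1|%:R != 0 :> R by rewrite pnatr_eq0 -lt0n.
  rewrite mulrAC mulrA mulfV // mul1r mulrC; congr (_ * _).
move=> mu hmu eps heps; have [nu Snu d] := hmu eps heps.
by exists nu => //; apply: sub.
Qed.
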